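(* Let $0<\rho_{\max}$ and $0<w_{\min}\le w_{\max}$, and let $V:[0,\rho_{\max})\times[w_{\min},w_{\max}]\to\mathbb{R}$, $(\rho,w)\mapsto V(\rho,w)$, be a $C^2$ function such that the generalized flow rate $Q(\rho,w)=\rho\,V(\rho,w)$ satisfies $\frac{\partial^2 Q}{\partial\rho^2}(\rho,w)<0$ for all $(\rho,w)$ in the domain. Define the characteristic velocities $$\lambda^{(1)}(\rho,w)=V(\rho,w)+\rho\,\frac{\partial V}{\partial\rho}(\rho,w),\qquad \lambda^{(2)}(\rho,w)=V(\rho,w).$$ Then for all $(\rho,w)$ in the domain, $\frac{\partial\lambda^{(1)}}{\partial\rho}(\rho,w)<0$ and $\frac{\partial\lambda^{(2)}}{\partial\rho}(\rho,w)<0$, where the partial derivatives in $\rho$ are taken with $w$ held fixed.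
   Context: This concerns the generalized Aw-Rascle-Zhang (GARZ) traffic model $\rho_t+(\rho u)_x=0$, $w_t+u w_x=0$ with $u=V(\rho,w)$, where $\rho$ is the vehicle density, $w$ the empty road velocity and $V$ the generalized velocity function. Written in conservative variables $(\rho,q)$ with $q=\rho w$, the flux is $(u\rho,uq)$, and the eigenvalues of its Jacobian are $\lambda^{(1)}=u+\rho\,\partial V/\partial\rho$ and $\lambda^{(2)}=u$, with $\partial V/\partial\rho$ computed at fixed $w$. *)

(* Defs.v *)
From Stdlib Require Import Reals.
From Coquelicot Require Import Coquelicot.
Open Scope R_scope.

Definition d_rho (f : R -> R -> R) : R -> R -> R :=
  fun x y => Derive (fun t => f t y) x.
Definition d_w (f : R -> R -> R) : R -> R -> R :=
  fun x y => Derive (fun t => f x t) y.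

Definition partials_exist (f : R -> R -> R) (x y : R) : Prop :=
  ex_derive (fun t => f t y) x /\ ex_derive (fun t => f x t) y.

Definition C2_on (U : R * R -> Prop) (f : R -> R -> R) : Prop :=
  forall x y, U (x, y) ->
    partials_exist f x y /\
    partials_exist (d_rho f) x y /\ partials_exist (d_w f) x y /\
    continuity_2d_pt f x y /\
    continuity_2d_pt (d_rho f) x y /\ continuity_2d_pt (d_w f) x y /\
    continuity_2d_pt (d_rho (d_rho f)) x y /\
    continuity_2d_pt (d_w (d_rho f)) x y /\
    continuity_2d_pt (d_rho (d_w f)) x y /\
    continuity_2d_pt (d_w (d_w f)) x y.

Definition dom (rho_max w_min w_max : R) (p : R * R) : Prop :=
  0 <= fst p < rho_max /\ w_min <= snd p <= w_max.

Definition Qflow (V : R -> R -> R) : R -> R -> R := fun r w => r * V r w.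

Definition lambda1 (V : R -> R -> R) : R -> R -> R :=
  fun r w => V r w + r * d_rho V r w.
Definition lambda2 (V : R -> R -> R) : R -> R -> R := fun r w => V r w.

(* Main.v *)
Require Import Defs.
From Stdlib Require Import Reals.
From Coquelicot Require Import Coquelicot.
From Stdlib Require Import Lra.
Open Scope R_scope.

Lemma slice_loc (U : R * R -> Prop) t w :
  open U -> U (t, w) -> locally t (fun s => U (s, w)).
Proof.
  intros HU Ht. destruct (HU _ Ht) as [eps He].
  exists eps. intros s Hs. apply He. split; simpl; [exact Hs | apply ball_center].
Qed.

Lemma dQ1 (V : R -> R -> R) s w :
  ex_derive (fun t => V t w) s ->
  d_rho (Qflow V) s w = V s w + s * d_rho V s w.
Proof.
  intros H. unfold d_rho, Qflow.
  rewrite (Derive_mult (fun t => t) (fun t => V t w)); auto.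
  rewrite Derive_id. ring. apply ex_derive_id.
Qed.

Lemma key (U : R * R -> Prop) V t w :
  open U -> C2_on U V -> U (t, w) ->
  d_rho (d_rho (Qflow V)) t w = 2 * d_rho V t w + t * d_rho (d_rho V) t w /\
  d_rho (lambda1 V) t w = 2 * d_rho V t w + t * d_rho (d_rho V) t w.
Proof.
  intros HU HC Ht.
  destruct (HC _ _ Ht) as [[H1 _] [[H2 _] _]].
  assert (E : d_rho (lambda1 V) t w = 2 * d_rho V t w + t * d_rho (d_rho V) t w).
  { unfold lambda1, d_rho at 1.
    rewrite Derive_plus; auto.
    rewrite (Derive_mult (fun s => s) (fun s => d_rho V s w)); auto.
    rewrite Derive_id. unfold d_rho. ring.
    apply ex_derive_id.
    apply ex_derive_mult; auto. apply ex_derive_id. }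
  split; auto. rewrite <- E.
  change (Derive (fun s => d_rho (Qflow V) s w) t = Derive (fun s => lambda1 V s w) t).
  apply Derive_ext_loc.
  generalize (slice_loc U t w HU Ht). apply filter_imp. intros s Hs.
  destruct (HC _ _ Hs) as [[Hs1 _] _].
  rewrite dQ1; auto.
Qed.

Theorem lemma2 (rho_max w_min w_max : R) (V : R -> R -> R)
  (U : R * R -> Prop) :
  0 < rho_max -> 0 < w_min -> w_min <= w_max ->
  open U ->
  (forall p, dom rho_max w_min w_max p -> U p) ->
  C2_on U V ->
  (forall r w, dom rho_max w_min w_max (r, w) ->
     d_rho (d_rho (Qflow V)) r w < 0) ->
  forall r w, dom rho_max w_min w_max (r, w) ->
    d_rho (lambda1 V) r w < 0 /\ d_rho (lambda2 V) r w < 0.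
Proof.
  intros Hr Hw1 Hw2 HU Hdom HC HQ r w Hd.
  destruct (key U V r w HU HC (Hdom _ Hd)) as [K1 K2].
  split.
  { rewrite K2, <- K1. apply HQ; auto. }
  change (d_rho V r w < 0).
  destruct Hd as [[Hr0 Hr1] Hw]; simpl in Hr0, Hr1, Hw.
  destruct (Req_dec r 0) as [E|Ne].
  { subst r. assert (H := HQ 0 w (conj (conj (Rle_refl 0) Hr1) Hw)).
    rewrite K1 in H. rewrite Rmult_0_l, Rplus_0_r in H. lra. }
  assert (Hpos : 0 < r) by (destruct Hr0 as [|E]; [assumption|exfalso; apply Ne; symmetry; assumption]).
  set (h := fun s => s * s * d_rho V s w).
  set (h' := fun s => 2 * s * d_rho V s w + s * s * d_rho (d_rho V) s w).
  destruct (MVT_cor2 h h' 0 r Hpos) as [c [Hc Hcr]].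
  { intros c Hc. apply is_derive_Reals.
    assert (Dc : dom rho_max w_min w_max (c, w)) by (split; simpl; lra).
    destruct (HC _ _ (Hdom _ Dc)) as [_ [[H2 _] _]].
    unfold h, h'. unfold d_rho at 3.
    auto_derive. exact H2.
    set (A := d_rho V c w). set (B := Derive (fun x : R => d_rho V x w) c). ring. }
  assert (Dc : dom rho_max w_min w_max (c, w)) by (split; simpl; lra).
  destruct (key U V c w HU HC (Hdom _ Dc)) as [Kc _].
  assert (Q := HQ c w Dc). rewrite Kc in Q.
  unfold h, h' in Hc.
  assert (Hh : r * r * d_rho V r w < 0).
  { assert (h'c : c * (2 * d_rho V c w + c * d_rho (d_rho V) c w) < 0)
      by (apply Rmult_lt_0_compat_neg; lra) || nra.
    nra. }
  nra.
Qed.
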